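(* Let $r,k\geq 2$ be integers. Then $0\in D_{r,k}$, and whenever $d,d'\in D_{r,k}$ we have $d+d'\in D_{r,k}$.
   Context: For positive integers $v,b,r,k$, a $(v,b,r,k)$-configuration is a connected bipartite graph with $v$ vertices on one side, each of degree $r$, and $b$ vertices on the other side, each of degree $k$, containing no cycle of length $4$. By convention the empty graph (with $v=b=0$) is also regarded as a configuration. A tuple $(v,b,r,k)$ is configurable if a $(v,b,r,k)$-configuration exists. Let $\mathbb{N}_0=\{0,1,2,\dots\}$ and define $$D_{r,k}=\left\{d\in\mathbb{N}_0:\left(d\tfrac{k}{\gcd(r,k)},\,d\tfrac{r}{\gcd(r,k)},\,r,\,k\right)\text{ is configurable}\right\}.$$ *)

(* Defs.v *)
From mathcomp Require Import all_boot.
Set Implicit Arguments. Unset Strict Implicit. Unset Printing Implicit Defensive.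

(* A bipartite graph with v "points" ('I_v) and b "blocks" ('I_b) is given by
   its incidence (adjacency) relation inc : 'I_v -> 'I_b -> bool. *)

Definition bip_adj (v b : nat) (inc : 'I_v -> 'I_b -> bool)
  : rel ('I_v + 'I_b)%type :=
  fun x y => match x, y with
             | inl p, inr B => inc p B
             | inr B, inl p => inc p B
             | _, _ => false
             end.

Definition bip_connected (v b : nat) (inc : 'I_v -> 'I_b -> bool) : Prop :=
  forall x y : ('I_v + 'I_b)%type, connect (bip_adj inc) x y.

Definition has_C4 (v b : nat) (inc : 'I_v -> 'I_b -> bool) : Prop :=
  exists (p q : 'I_v) (B B' : 'I_b),
    [/\ p != q, B != B', inc p B, inc q B & inc p B' /\ inc q B'].

Definition is_configuration (v b r k : nat) (inc : 'I_v -> 'I_b -> bool) : Prop :=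
  [/\ bip_connected inc,
      forall p : 'I_v, #|[set B | inc p B]| = r,
      forall B : 'I_b, #|[set p | inc p B]| = k
    & ~ has_C4 inc].

Definition configurable (v b r k : nat) : Prop :=
  (v = 0 /\ b = 0) \/ exists inc : 'I_v -> 'I_b -> bool, is_configuration r k inc.

Definition inD (r k d : nat) : Prop :=
  configurable (d * (k %/ gcdn r k)) (d * (r %/ gcdn r k)) r k.

(* Main.v *)
Require Import Defs.
From mathcomp Require Import all_boot zify.
Set Implicit Arguments. Unset Strict Implicit. Unset Printing Implicit Defensive.

Lemma connect_hom (T T' : finType) (e : rel T) (e' : rel T') (f : T -> T') :
  (forall x y, e x y -> e' (f x) (f y)) ->
  forall x y, connect e x y -> connect e' (f x) (f y).
Proof.
move=> h x y /connectP [s pth ->]; elim: s x pth => [|z s IH] x /=.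
  by rewrite connect0.
by case/andP => exz /IH; apply: connect_trans (connect1 (h _ _ exz)).
Qed.

Lemma path_connect_last (T : finType) (e : rel T) x s y :
  path e x s -> y \in x :: s -> connect e y (last x s).
Proof.
elim: s x y => [|a s IH] x y /=.
  by rewrite inE => _ /eqP ->; rewrite connect0.
case/andP => exa pas; rewrite inE => /orP [/eqP -> | ys].
  have h := IH a a pas (mem_head _ _).
  exact: connect_trans (connect1 exa) h.
exact: IH.
Qed.

Definition rem_edge (T : eqType) (e : rel T) (a b : T) : rel T :=
  fun x y => e x y && ~~ (((x == a) && (y == b)) || ((x == b) && (y == a))).

Lemma max_path (T : finType) (e : rel T) (N : nat)
  (HN : forall s : seq T, uniq s -> size s <= N) x0 n s :
  path e x0 s -> uniq (x0 :: s) -> N - size s <= n ->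
  exists s', [/\ path e x0 s', uniq (x0 :: s') &
                 forall w, e (last x0 s') w -> w \in x0 :: s'].
Proof.
elim: n s => [|n IH] s ps us hn.
  exists s; split => // w ew; apply/negPn/negP => wn.
  have : uniq (x0 :: rcons s w) by rewrite -rcons_cons rcons_uniq wn.
  move/HN; rewrite /= size_rcons; lia.
case: (boolP [forall w, e (last x0 s) w ==> (w \in x0 :: s)]) => [/forallP H|].
  by exists s; split => // w ew; have := H w; rewrite ew.
rewrite negb_forall => /existsP [w]; rewrite negb_imply => /andP [ew wn].
have us' : uniq (x0 :: rcons s w) by rewrite -rcons_cons rcons_uniq wn.
apply: (IH (rcons s w)) => //; first by rewrite rcons_path ps.
move/HN: us'; rewrite /= size_rcons; lia.
Qed.

Lemma cycle_edge (T : finType) (e : rel T) (x0 : T) :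
  symmetric e -> irreflexive e ->
  (forall x, exists y1 y2, [/\ y1 != y2, e x y1 & e x y2]) ->
  exists a b, e a b /\ connect (rem_edge e a b) a b.
Proof.
move=> se ie deg.
have HN : forall s : seq T, uniq s -> size s <= #|T|.
  by move=> s /card_uniqP <-; apply: max_card.
have [s [ps us mx]] := @max_path T e #|T| HN x0 #|T| [::] (erefl _) (erefl _) (leq_subr _ _).
have [y1 [y2 [y12 e1 e2]]] := deg (last x0 s).
case/lastP: s ps us mx e1 e2 => [|u z] ps us mx e1 e2 /=.
  by move/mx: (e1); rewrite inE => /eqP ez; rewrite /= -ez ie in e1.
rewrite last_rcons in mx e1 e2.
move: ps; rewrite rcons_path => /andP [pu eyz].
move: us; rewrite -rcons_cons rcons_uniq => /andP [zu _].
set y := last x0 u in eyz.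
have [w [wy ezw]] : exists w, w != y /\ e z w.
  case: (eqVneq y1 y) => [h|]; last by exists y1.
  by exists y2; split => //; rewrite -h eq_sym.
have wu : w \in x0 :: u.
  move: (mx _ ezw); rewrite -rcons_cons mem_rcons inE => /orP [/eqP wz|//].
  by rewrite wz ie in ezw.
have pu' : path (rem_edge e z y) x0 u.
  apply: (sub_in_path (P := predC1 z)); last exact: pu.
    move=> a b; rewrite !inE => az bz eab; rewrite /rem_edge eab /=.
    by rewrite (negbTE az) (negbTE bz) andbF.
  by apply/allP => a au; rewrite !inE; apply: contraNneq zu => <-.
exists z, y; split; first by rewrite se.
have := path_connect_last pu' wu; rewrite -/y => hw.
apply: (connect_trans _ hw).
apply: connect1; rewrite /rem_edge ezw /= eqxx /= (negbTE wy) /=.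
apply/negP => /andP [/eqP h _]; by rewrite h ie in eyz.
Qed.

Lemma card_swap (T : finType) (S : {set T}) x y :
  x \in S -> y \notin S -> #|y |: (S :\ x)| = #|S|.
Proof.
move=> xS yS; rewrite cardsU1 (cardsD1 x S) xS !inE.
by rewrite (negbTE yS) andbF.
Qed.

Section Swap.
Variables (v b r k : nat) (inc : 'I_v -> 'I_b -> bool) (p1 p2 : 'I_v) (b1 b2 : 'I_b).

Definition oldE p B := inc p B && ~~((p == p1) && (B == b1)) && ~~((p == p2) && (B == b2)).
Definition swp p B := oldE p B || ((p == p1) && (B == b2)) || ((p == p2) && (B == b1)).

Hypotheses (degP : forall p, #|[set B | inc p B]| = r)
  (degB : forall B, #|[set p | inc p B]| = k) (noC4 : ~ has_C4 inc)
  (i11 : inc p1 b1) (i22 : inc p2 b2) (p12 : p1 != p2) (b12 : b1 != b2)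
  (n12 : ~~ inc p1 b2) (n21 : ~~ inc p2 b1)
  (H1 : forall q B', inc q b2 -> inc p1 B' -> inc q B' -> False)
  (H2 : forall q B', inc q b1 -> inc p2 B' -> inc q B' -> False).

Lemma swp_degP p : #|[set B | swp p B]| = r.
Proof.
have p21 : (p2 == p1) = false by rewrite eq_sym (negbTE p12).
case: (eqVneq p p1) => [->|pp1].
  rewrite -(degP p1) -(@card_swap _ [set B | inc p1 B] b1 b2); [|by rewrite inE|by rewrite inE].
    apply: eq_card => B; rewrite !inE /swp /oldE eqxx (negbTE p12) /=.
    by case: (B == b2); case: (B == b1); case: (inc p1 B).
case: (eqVneq p p2) => [->|pp2].
  rewrite -(degP p2) -(@card_swap _ [set B | inc p2 B] b2 b1); [|by rewrite inE|by rewrite inE].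
    apply: eq_card => B; rewrite !inE /swp /oldE eqxx p21 /=.
    by case: (B == b2); case: (B == b1); case: (inc p2 B).
rewrite -(degP p); apply: eq_card => B.
rewrite !inE /swp /oldE (negbTE pp1) (negbTE pp2) /=. by case: (inc p B).
Qed.

Lemma swp_degB B : #|[set p | swp p B]| = k.
Proof.
have b21 : (b2 == b1) = false by rewrite eq_sym (negbTE b12).
case: (eqVneq B b1) => [->|bb1].
  rewrite -(degB b1) -(@card_swap _ [set p | inc p b1] p1 p2); [|by rewrite inE|by rewrite inE].
    apply: eq_card => p; rewrite !inE /swp /oldE eqxx (negbTE b12) /= !andbF /= !andbT orbF.
    by case: (p == p2); case: (p == p1); case: (inc p b1).
case: (eqVneq B b2) => [->|bb2].
  rewrite -(degB b2) -(@card_swap _ [set p | inc p b2] p2 p1); [|by rewrite inE|by rewrite inE].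
    apply: eq_card => p; rewrite !inE /swp /oldE eqxx b21 /= !andbF /= !andbT.
    by case: (p == p2); case: (p == p1); case: (inc p b2).
rewrite -(degB B); apply: eq_card => p.
by rewrite !inE /swp /oldE (negbTE bb1) (negbTE bb2) /= !andbF !orbF !andbT.
Qed.

Definition isnew p B := ((p == p1) && (B == b2)) || ((p == p2) && (B == b1)).

Lemma nonew p q B B' : p != q -> B != B' -> swp p B -> swp q B -> swp p B' -> swp q B' ->
  ~~ isnew p B.
Proof.
have b21 : (b2 == b1) = false by rewrite eq_sym (negbTE b12).
have p21 : (p2 == p1) = false by rewrite eq_sym (negbTE p12).
move=> pq BB hpB hqB hpB' hqB'; apply/negP; rewrite /isnew => /orP [] /andP [/eqP ep /eqP eB];
  subst p B.
- have qp : (q == p1) = false by rewrite eq_sym (negbTE pq).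
  have Bb : (B' == b2) = false by rewrite eq_sym (negbTE BB).
  move: hqB hpB' hqB' (@H1 q B'); rewrite /swp /oldE qp Bb b21 (negbTE p12) !eqxx /=.
  case: (inc q b2); case: (inc p1 B'); case: (inc q B'); case: (q == p2); case: (B' == b1);
    move=> //= *; by intuition.
- have qp : (q == p2) = false by rewrite eq_sym (negbTE pq).
  have Bb : (B' == b1) = false by rewrite eq_sym (negbTE BB).
  move: hqB hpB' hqB' (@H2 q B'); rewrite /swp /oldE qp Bb (negbTE b12) p21 !eqxx /=.
  case: (inc q b1); case: (inc p2 B'); case: (inc q B'); case: (q == p1); case: (B' == b2);
    move=> //= *; by intuition.
Qed.

Lemma swp_old p B : swp p B -> ~~ isnew p B -> inc p B.
Proof. by rewrite /swp /isnew -orbA => /orP [/andP [/andP [-> _] _]|->]. Qed.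

Lemma swp_noC4 : ~ has_C4 swp.
Proof.
move=> [p [q [B [B' [pq BB ipB iqB [ipB' iqB']]]]]].
apply: noC4; exists p, q, B, B'; split => //.
- exact: swp_old ipB (nonew pq BB ipB iqB ipB' iqB').
- by apply: swp_old iqB (nonew _ BB iqB ipB iqB' ipB'); rewrite eq_sym.
- split.
  + by apply: swp_old ipB' (nonew pq _ ipB' iqB' ipB iqB); rewrite eq_sym.
  + by apply: swp_old iqB' (nonew _ _ iqB' ipB' iqB ipB); rewrite eq_sym.
Qed.

Hypotheses (conn : forall x, connect (bip_adj inc) x (inl p1) \/ connect (bip_adj inc) x (inl p2))
  (alt : connect (bip_adj oldE) (inl p1) (inr b1)).

Lemma bip_sym v' b' (f : 'I_v' -> 'I_b' -> bool) : symmetric (bip_adj f).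
Proof. by case=> x [] y. Qed.

Lemma swp_conn : bip_connected swp.
Proof.
have cs := sym_connect_sym (bip_sym swp).
have c1 : connect (bip_adj swp) (inl p1) (inr b1).
  apply: connect_sub alt => x y h; apply: connect1; move: x y h => [x|x] [y|y] //=;
    by rewrite /swp => ->.
have c2 : connect (bip_adj swp) (inl p2) (inl p1).
  apply: connect_trans (connect1 _) _; last by rewrite cs; exact: c1.
  by rewrite /= /swp !eqxx !orbT.
have c3 : forall p B, inc p B -> connect (bip_adj swp) (inl p) (inr B).
  move=> p B ipB.
  case: (boolP ((p == p1) && (B == b1))) => [/andP [/eqP -> /eqP ->] //|h1].
  case: (boolP ((p == p2) && (B == b2))) => [/andP [/eqP -> /eqP ->]|h2].
    apply: connect_trans c2 (connect1 _); by rewrite /= /swp !eqxx /= orbT.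
  by apply: connect1; rewrite /= /swp /oldE ipB h1 h2.
have c4 : forall x, connect (bip_adj swp) x (inl p1).
  move=> x; have sub : subrel (bip_adj inc) (connect (bip_adj swp)).
    move=> [y|y] [z|z] //= h; first exact: c3.
    by rewrite cs; exact: c3.
  case: (conn x) => /(connect_sub sub) // h.
  exact: connect_trans h c2.
by move=> x y; apply: connect_trans (c4 x) _; rewrite cs; exact: c4.
Qed.

Lemma swp_conf : is_configuration r k swp.
Proof. split; [exact: swp_conn|exact: swp_degP|exact: swp_degB|exact: swp_noC4]. Qed.

End Swap.

Lemma split_l m n (x : 'I_m) : split (lshift n x) = inl x.
Proof. exact: (unsplitK (inl x)). Qed.
Lemma split_r m n (x : 'I_n) : split (rshift m x) = inr x.
Proof. exact: (unsplitK (inr x)). Qed.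

Lemma card_l m n (S : {set 'I_m}) (P : pred 'I_(m + n)) :
  (forall y, P (lshift n y) = (y \in S)) -> (forall y, P (rshift m y) = false) ->
  #|[set B | P B]| = #|S|.
Proof.
move=> hl hr; rewrite -(card_imset S (@lshift_inj m n)); apply: eq_card => B.
rewrite inE; case: (split_ordP B) => y ->; first by rewrite hl mem_imset //; exact: lshift_inj.
rewrite hr; apply/esym/imsetP => [[z _ /eqP]]; by rewrite eq_rlshift.
Qed.

Lemma card_r m n (S : {set 'I_n}) (P : pred 'I_(m + n)) :
  (forall y, P (lshift n y) = false) -> (forall y, P (rshift m y) = (y \in S)) ->
  #|[set B | P B]| = #|S|.
Proof.
move=> hl hr; rewrite -(card_imset S (@rshift_inj m n)); apply: eq_card => B.
rewrite inE; case: (split_ordP B) => y ->; last by rewrite hr mem_imset //; exact: rshift_inj.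
rewrite hl; apply/esym/imsetP => [[z _ /eqP]]; by rewrite eq_lrshift.
Qed.

Lemma eq_inl (A B : eqType) (a b : A) : (@inl A B a == inl b) = (a == b).
Proof. by apply/eqP/eqP => [[]|->]. Qed.
Lemma eq_inr (A B : eqType) (a b : B) : (@inr A B a == inr b) = (a == b).
Proof. by apply/eqP/eqP => [[]|->]. Qed.
Lemma eq_inlr (A B : eqType) (a : A) (b : B) : (inl a == inr b) = false.
Proof. by apply/eqP. Qed.
Lemma eq_inrl (A B : eqType) (a : A) (b : B) : (inr b == inl a) = false.
Proof. by apply/eqP. Qed.

Section Union.
Variables (v1 b1 v2 b2 r k : nat) (i1 : 'I_v1 -> 'I_b1 -> bool) (i2 : 'I_v2 -> 'I_b2 -> bool).

Definition uinc (p : 'I_(v1 + v2)) (B : 'I_(b1 + b2)) : bool :=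
  match split p, split B with
  | inl x, inl y => i1 x y
  | inr x, inr y => i2 x y
  | _, _ => false
  end.

Lemma uinc_ll x y : uinc (lshift v2 x) (lshift b2 y) = i1 x y.
Proof. by rewrite /uinc !split_l. Qed.
Lemma uinc_rr x y : uinc (rshift v1 x) (rshift b1 y) = i2 x y.
Proof. by rewrite /uinc !split_r. Qed.
Lemma uinc_lr x y : uinc (lshift v2 x) (rshift b1 y) = false.
Proof. by rewrite /uinc split_l split_r. Qed.
Lemma uinc_rl x y : uinc (rshift v1 x) (lshift b2 y) = false.
Proof. by rewrite /uinc split_l split_r. Qed.

Hypotheses (c1 : is_configuration r k i1) (c2 : is_configuration r k i2).

Lemma uinc_degP p : #|[set B | uinc p B]| = r.
Proof.
case: c1 c2 => _ d1 _ _ [_ d2 _ _].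
case: (split_ordP p) => x ->.
  by rewrite -(d1 x); apply: card_l => y; rewrite ?uinc_ll ?uinc_lr ?inE.
by rewrite -(d2 x); apply: card_r => y; rewrite ?uinc_rr ?uinc_rl ?inE.
Qed.

Lemma uinc_degB B : #|[set p | uinc p B]| = k.
Proof.
case: c1 c2 => _ _ d1 _ [_ _ d2 _].
case: (split_ordP B) => y ->.
  by rewrite -(d1 y); apply: card_l => x; rewrite ?uinc_ll ?uinc_rl ?inE.
by rewrite -(d2 y); apply: card_r => x; rewrite ?uinc_rr ?uinc_lr ?inE.
Qed.

Lemma uinc_noC4 : ~ has_C4 uinc.
Proof.
case: c1 c2 => _ _ _ n1 [_ _ _ n2].
move=> [p [q [B [B' []]]]].
case: (split_ordP p) => x ->; case: (split_ordP q) => x' ->;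
case: (split_ordP B) => y ->; case: (split_ordP B') => y' ->;
rewrite ?uinc_ll ?uinc_rr ?uinc_lr ?uinc_rl ?eq_shift //= => h1 h2 h3 h4 [h5 h6];
  try congruence.
- by apply: n1; exists x, x', y, y'.
- by apply: n2; exists x, x', y, y'.
Qed.

End Union.

Lemma rem_edge_sym (T : finType) (e : rel T) a b : symmetric e -> symmetric (rem_edge e a b).
Proof.
move=> se x y; rewrite /rem_edge se; congr (_ && ~~ _).
by rewrite orbC (andbC (y == a)) (andbC (y == b)).
Qed.

Lemma bip_deg v b r k (i : 'I_v -> 'I_b -> bool) : 2 <= r -> 2 <= k ->
  is_configuration r k i ->
  forall X, exists y1 y2, [/\ y1 != y2, bip_adj i X y1 & bip_adj i X y2].
Proof.
move=> r2 k2 [_ dP dB _] [p|B].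
  have : 1 < #|[set B | i p B]| by rewrite dP.
  case/card_gt1P => [B [B' [hB hB' ne]]]; rewrite !inE in hB hB'.
  by exists (inr B), (inr B'); split.
have : 1 < #|[set p | i p B]| by rewrite dB.
case/card_gt1P => [p [p' [hp hp' ne]]]; rewrite !inE in hp hp'.
by exists (inl p), (inl p'); split.
Qed.

Lemma union_conf v1 b1 v2 b2 r k (i1 : 'I_v1 -> 'I_b1 -> bool) (i2 : 'I_v2 -> 'I_b2 -> bool)
  (p0 : 'I_v1) (q0 : 'I_v2) : 2 <= r -> 2 <= k ->
  is_configuration r k i1 -> is_configuration r k i2 ->
  exists inc : 'I_(v1 + v2) -> 'I_(b1 + b2) -> bool, is_configuration r k inc.
Proof.
move=> r2 k2 c1 c2.
have [a [b' [eab cab]]] := cycle_edge (inl p0 : ('I_v1 + 'I_b1)%type) (@bip_sym _ _ i1)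
  (fun x => match x with inl _ => erefl | inr _ => erefl end) (bip_deg r2 k2 c1).
have [x [y [ixy cxy]]] : exists x y, i1 x y /\
    connect (rem_edge (bip_adj i1) (inl x) (inr y)) (inl x) (inr y).
  move: a b' eab cab => [x|y] [x'|y'] //= h hc.
    by exists x, y'.
  exists x', y; split => //.
  rewrite (sym_connect_sym (rem_edge_sym _ _ (@bip_sym _ _ i1))).
  apply: connect_sub hc => u w h'; apply: connect1; move: h'.
  by rewrite /rem_edge orbC.
have [c0 ic0] : exists c0, i2 q0 c0.
  case: c2 => _ d2 _ _; have : 0 < #|[set B | i2 q0 B]| by rewrite d2; lia.
  by case/card_gt0P => c; rewrite inE => h; exists c.
exists (swp (uinc i1 i2) (lshift v2 x) (rshift v1 q0) (lshift b2 y) (rshift b1 c0)).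
pose f1 (u : ('I_v1 + 'I_b1)%type) : ('I_(v1 + v2) + 'I_(b1 + b2))%type :=
  match u with inl a => inl (lshift v2 a) | inr c => inr (lshift b2 c) end.
pose f2 (u : ('I_v2 + 'I_b2)%type) : ('I_(v1 + v2) + 'I_(b1 + b2))%type :=
  match u with inl a => inl (rshift v1 a) | inr c => inr (rshift b1 c) end.
have hom1 : forall u w, bip_adj i1 u w -> bip_adj (uinc i1 i2) (f1 u) (f1 w).
  by move=> [m1|n1] [m2|n2] //=; rewrite uinc_ll.
have hom2 : forall u w, bip_adj i2 u w -> bip_adj (uinc i1 i2) (f2 u) (f2 w).
  by move=> [m1|n1] [m2|n2] //=; rewrite uinc_rr.
case: (c1) => cn1 _ _ _; case: (c2) => cn2 _ _ _.
apply: (swp_conf (uinc_degP c1 c2) (uinc_degB c1 c2) (uinc_noC4 c1 c2)).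
- by rewrite uinc_ll.
- by rewrite uinc_rr.
- by rewrite eq_shift.
- by rewrite eq_shift.
- by rewrite uinc_lr.
- by rewrite uinc_rl.
- move=> q B'; case: (split_ordP q) => z ->; case: (split_ordP B') => w ->;
    rewrite ?uinc_ll ?uinc_rr ?uinc_lr ?uinc_rl => ha hb hc; congruence.
- move=> q B'; case: (split_ordP q) => z ->; case: (split_ordP B') => w ->;
    rewrite ?uinc_ll ?uinc_rr ?uinc_lr ?uinc_rl => ha hb hc; congruence.
- move=> [p|B].
    case: (split_ordP p) => z ->.
      by left; exact: (connect_hom hom1 (cn1 (inl z) (inl x))).
    by right; exact: (connect_hom hom2 (cn2 (inl z) (inl q0))).
  case: (split_ordP B) => z ->.
    by left; exact: (connect_hom hom1 (cn1 (inr z) (inl x))).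
  by right; exact: (connect_hom hom2 (cn2 (inr z) (inl q0))).
- have hom3 : forall u w, rem_edge (bip_adj i1) (inl x) (inr y) u w ->
      bip_adj (oldE (uinc i1 i2) (lshift v2 x) (rshift v1 q0) (lshift b2 y) (rshift b1 c0))
        (f1 u) (f1 w).
    move=> [m1|n1] [m2|n2] //=;
    rewrite /rem_edge /oldE /= uinc_ll !eq_shift /= ?eq_inl ?eq_inr ?eq_inlr ?eq_inrl /=.
      by case: (i1 m1 n2); case: (m1 == x); case: (n2 == y).
    by case: (i1 m2 n1); case: (m2 == x); case: (n1 == y).
  exact: (connect_hom hom3 cxy).
Qed.
Unset Implicit Arguments.

Theorem lemma6 (r k : nat) : 2 <= r -> 2 <= k ->
  inD r k 0 /\ (forall d d' : nat, inD r k d -> inD r k d' -> inD r k (d + d')).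
Proof.
move=> r2 k2; split; first by left; rewrite !mul0n.
have g0 : 0 < gcdn r k by rewrite gcdn_gt0; apply/orP; left; lia.
have kg0 : 0 < k %/ gcdn r k.
  by rewrite divn_gt0 // dvdn_leq ?dvdn_gcdr //; lia.
move=> d d' hd hd'.
case: (posnP d) => [-> | dpos]; first by rewrite add0n.
case: (posnP d') => [-> | dpos']; first by rewrite addn0.
case: hd => [[h0 _]|[i1 c1]].
  by move: h0; move/eqP; rewrite muln_eq0 => /orP []; lia.
case: hd' => [[h0 _]|[i2 c2]].
  by move: h0; move/eqP; rewrite muln_eq0 => /orP []; lia.
have p0 : 'I_(d * (k %/ gcdn r k)) by exists 0; rewrite muln_gt0 dpos.
have q0 : 'I_(d' * (k %/ gcdn r k)) by exists 0; rewrite muln_gt0 dpos'.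
rewrite /inD /configurable !mulnDl; right.
exact: (union_conf p0 q0 r2 k2 c1 c2).
Qed.
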